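(* Let $(\mathcal{A},v)$ be a valued abelian group and $A_1,\dots,A_n$ subgroups of $\mathcal{A}$. The sum $A_1+\dots+A_n\subseteq\mathcal{A}$ is pseudo-direct if and only if the group homomorphism $f:A_1\times\dots\times A_n\to A_1+\dots+A_n$, $f(a_1,\dots,a_n)=a_1+\dots+a_n$, is immediate, where $A_1\times\dots\times A_n$ carries the minimum valuation $v(a_1,\dots,a_n)=\min_i va_i$ and $A_1+\dots+A_n$ the restriction of $v$.
   Context: A valued abelian group $(G,v)$ is an abelian group with a map $v$ onto $vG\cup\{\infty\}$ ($vG$ totally ordered, $\infty$ maximal) with $va=\infty$ iff $a=0$ and $v(a-b)\ge\min\{va,vb\}$; it is an ultrametric space via $u(a,b)=v(a-b)$. The sum $A_1+\dots+A_n$ is pseudo-direct if for every nonzero $a'\in A_1+\dots+A_n$ there are $a_i\in A_i$ with $v\sum_{i=1}^na_i=\min_iva_i$ and $v(a'-\sum_{i=1}^na_i)>va'$. For a map $g$ of ultrametric spaces, with $B(x,y)=\{z:u(x,z)\ge u(x,y)\}$, $z'$ is an attractor if for every $y$ with $z'\ne gy$ there is $z$ with $u'(gz,z')>u'(gy,z')$ and $g(B(y,z))\subseteq B(gy,z')$; $g$ is immediate if every point of the target is an attractor. *)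

(* Defs.v *)
From HB Require Import structures.
From mathcomp Require Import all_boot all_order all_algebra.
Set Implicit Arguments. Unset Strict Implicit. Unset Printing Implicit Defensive.
Import Order.TTheory GRing.Theory.
Local Open Scope order_scope.

(* A valued abelian group: G an abelian group (zmodType), Gam = vG u {oo}
   a totally ordered set whose top element \top plays the role of oo. *)
Definition is_valuation {d} (G : zmodType) (Gam : tOrderType d) (v : G -> Gam) :=
  (forall a : G, v a = \top <-> a = 0%R) /\
  (forall a b : G, Order.min (v a) (v b) <= v (a - b)%R).

Definition ball {d} {X : Type} {Gam : tOrderType d} (u : X -> X -> Gam) (x y : X) : X -> Prop :=
  fun z => u x y <= u x z.

Definition attractor {d} {X Y : Type} {Gam : tOrderType d}
  (DX : X -> Prop) (u : X -> X -> Gam) (DY : Y -> Prop) (u' : Y -> Y -> Gam)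
  (g : X -> Y) (z' : Y) : Prop :=
  forall y, DX y -> z' <> g y ->
    exists z, DX z /\ u' (g y) z' < u' (g z) z' /\
      (forall w, DX w -> ball u y z w -> ball u' (g y) z' (g w)).

Definition immediate {d} {X Y : Type} {Gam : tOrderType d}
  (DX : X -> Prop) (u : X -> X -> Gam) (DY : Y -> Prop) (u' : Y -> Y -> Gam)
  (g : X -> Y) : Prop :=
  forall z', DY z' -> attractor DX u DY u' g z'.

Definition is_subgroup (G : zmodType) (A : G -> Prop) :=
  A 0%R /\ forall x y, A x -> A y -> A (x - y)%R.

Definition in_prod (G : zmodType) n (A : 'I_n -> G -> Prop) (a : 'I_n -> G) :=
  forall i, A i (a i).

Definition sumf (G : zmodType) n (a : 'I_n -> G) : G := (\sum_(i < n) a i)%R.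

Definition in_sum (G : zmodType) n (A : 'I_n -> G -> Prop) (x : G) :=
  exists a, in_prod A a /\ x = sumf a.

Definition vmin {d} (G : zmodType) (Gam : tOrderType d) (v : G -> Gam) n (a : 'I_n -> G) : Gam :=
  \big[Order.min/(\top : Gam)]_(i < n) v (a i).

Definition pseudo_direct {d} (G : zmodType) (Gam : tOrderType d) (v : G -> Gam) n
  (A : 'I_n -> G -> Prop) : Prop :=
  forall a', in_sum A a' -> a' <> 0%R ->
    exists a, in_prod A a /\ v (sumf a) = vmin v a /\ v a' < v (a' - sumf a)%R.

(* Main.v *)
Require Import Defs.
From mathcomp Require Import all_boot all_order all_algebra.
Import Order.TTheory GRing.Theory.

Section H.
Context {d : Order.disp_t} {G : zmodType} {Gam : tOrderType d} {v : G -> Gam}.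
Hypothesis hv : is_valuation v.
Local Open Scope order_scope.

Lemma v0 : v 0%R = \top.
Proof. by apply hv. Qed.

Lemma vtri a b : Order.min (v a) (v b) <= v (a - b)%R.
Proof. by apply (proj2 hv). Qed.

Lemma vtri' a b c : c <= v a -> c <= v b -> c <= v (a - b)%R.
Proof. by move=> ha hb; apply: le_trans (vtri a b); rewrite le_min ha hb. Qed.

Lemma vN x : v (- x)%R = v x.
Proof.
apply/le_anti/andP; split.
- have := @vtri' 0%R (- x)%R (v (- x)); rewrite sub0r opprK v0.
  by apply; rewrite ?lex1.
- by have := @vtri' 0%R x (v x); rewrite sub0r v0; apply; rewrite ?lex1.
Qed.

Lemma vD' a b c : c <= v a -> c <= v b -> c <= v (a + b)%R.
Proof. by move=> ha hb; rewrite -(opprK b); apply: vtri'; rewrite ?vN. Qed.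

Lemma vsym a b : v (a - b)%R = v (b - a)%R.
Proof. by rewrite -vN opprB. Qed.

Lemma vmin_ge n (a : 'I_n -> G) c : (forall i, c <= v (a i)) -> c <= vmin v a.
Proof. move=> h; rewrite /vmin; apply: (big_ind (fun y => c <= y)) => //.
  by move=> x y hx hy; rewrite le_min hx hy. Qed.

Lemma vmin_le n (a : 'I_n -> G) i : vmin v a <= v (a i).
Proof. exact: bigmin_le. Qed.

Lemma vsum n (a : 'I_n -> G) : vmin v a <= v (sumf a).
Proof.
rewrite /sumf; apply: (big_ind (fun y => vmin v a <= v y)).
- by rewrite v0 lex1.
- by move=> x y; apply: vD'.
- by move=> i _; apply: vmin_le.
Qed.

Lemma vclose x y : v x < v (x - y)%R -> v y = v x.
Proof.
move=> h; apply/le_anti/andP; split.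
- have := vtri y (y - x)%R; have -> : (y - (y - x) = x)%R by rewrite opprB addrC subrK.
  rewrite vsym.
  rewrite ge_min => /orP [//|h2]; exfalso.
  by have := lt_le_trans h h2; rewrite ltxx.
- have := vtri x (x - y)%R; have -> : (x - (x - y) = y)%R by rewrite opprB addrC subrK.
  by rewrite min_l // ltW.
Qed.
End H.

Local Open Scope order_scope.

Theorem proposition64 {d} (G : zmodType) (Gam : tOrderType d) (v : G -> Gam)
  (n : nat) (A : 'I_n -> G -> Prop) :
  is_valuation v ->
  (forall i, is_subgroup (A i)) ->
  pseudo_direct v A <->
  immediate (in_prod A) (fun a b => vmin v (fun i => (a i - b i)%R))
            (in_sum A) (fun x y => v (x - y)%R)
            (@sumf G n).
Proof.
move=> hv hA.
have A0 : forall i, A i 0%R by move=> i; apply: (proj1 (hA i)).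
have AB : forall i x y, A i x -> A i y -> A i (x - y)%R by move=> i; apply: (proj2 (hA i)).
have AN : forall i x, A i x -> A i (- x)%R by move=> i x hx; rewrite -sub0r; apply: AB.
have AD : forall i x y, A i x -> A i y -> A i (x + y)%R.
  by move=> i x y hx hy; rewrite -(opprK y); apply: AB => //; apply: AN.
have sumfB : forall a b : 'I_n -> G, sumf (fun i => a i - b i)%R = (sumf a - sumf b)%R.
  by move=> a b; rewrite /sumf sumrB.
have sumfD : forall a b : 'I_n -> G, sumf (fun i => a i + b i)%R = (sumf a + sumf b)%R.
  by move=> a b; rewrite /sumf big_split.
split.
- move=> pd z' [b [hb ->]] y hy hne.
  set a' := (sumf b - sumf y)%R.
  have hs : in_sum A a'.
    by exists (fun i => b i - y i)%R; split; [move=> i; apply: AB|rewrite sumfB].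
  have hne' : a' <> 0%R by move=> /eqP; rewrite subr_eq0 => /eqP h; apply: hne.
  have [a [ha [hva hlt]]] := pd _ hs hne'.
  have hva' := vclose hv _ _ hlt.
  exists (fun i => y i + a i)%R; split; first by move=> i; apply: AD.
  have e1 : v (sumf y - sumf b)%R = v a' by rewrite vsym.
  split.
    rewrite e1 sumfD.
    have -> : (sumf y + sumf a - sumf b = - (a' - sumf a))%R.
      by rewrite /a' [in RHS]opprB [in RHS]opprB [in RHS]addrA [(sumf a + _)%R]addrC.
    by rewrite vN.
  move=> w hw; rewrite /ball e1.
  have -> : vmin v (fun i => y i - (y i + a i))%R = vmin v a.
    rewrite /vmin; apply: eq_bigr => i _.
    by rewrite opprD addrA subrr sub0r vN.
  move=> hball.
  rewrite -hva' hva -sumfB.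
  exact: le_trans hball (vsum hv _ _).
- move=> im a' hs hne.
  have s0 : sumf (fun _ : 'I_n => 0%R : G) = 0%R by rewrite /sumf big1.
  have hne' : a' <> sumf (fun _ : 'I_n => 0%R : G) by rewrite s0.
  have [z [hz [hlt hball]]] := im a' hs (fun _ => 0%R) (fun i => A0 i) hne'.
  rewrite s0 sub0r (vN hv) (vsym hv (sumf z) a') in hlt.
  exists z; split => //; split => //.
  have hz' := vclose hv _ _ hlt.
  apply/le_anti; rewrite (vsum hv) andbT hz'.
  apply: vmin_ge => i.
  pose w := fun j => if j == i then 0%R else z j.
  have hw : in_prod A w by move=> j; rewrite /w; case: ifP.
  have hb := hball w hw.
  have hb' : v a' <= v (sumf w).
    have := hb; rewrite /ball s0 !sub0r !(vN hv); apply.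
    apply: vmin_ge => j; rewrite /w.
    case: ifP => _; first by rewrite subrr (v0 hv) lex1.
    exact: (vmin_le _ (fun k => 0 - z k)%R j).
  have -> : z i = (sumf z - sumf w)%R.
    rewrite /sumf (bigD1 i) //= [in X in _ = (_ - X)%R](bigD1 i) //=.
    rewrite /w eqxx add0r.
    have -> : (\sum_(j < n | j != i) (if j == i then 0%R else z j) = \sum_(j < n | j != i) z j)%R.
      by apply: eq_bigr => j /negbTE ->.
    by rewrite addrK.
  by apply: (vtri' hv) => //; rewrite hz'.
Qed.
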